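(* Let $n\ge 2$ be an integer and let $\mathbf{q}$ be an indeterminate. Let $H$ be the $\mathbb{Z}[\mathbf{q}]$-algebra with generators $T_1,T_2,\dots,T_{n-1}$ and relations $(T_i+1)(T_i-\mathbf{q})=0$ for $i\in[1,n-1]$, $T_iT_{i+1}T_i=T_{i+1}T_iT_{i+1}$ for $i\in[1,n-2]$, and $T_iT_j=T_jT_i$ for $i\ne j$ in $[1,n-1]$ (the Hecke algebra of type $A_{n-1}$). Set $$\tau=T_1T_2\cdots T_{n-1}+T_2T_3\cdots T_{n-1}+\dots+T_{n-2}T_{n-1}+T_{n-1}+1\in H.$$ Then the following equality holds in $H$: $$\tau\prod_{k\in[1,n],\,k\ne n-1}\bigl(\tau-1-\mathbf{q}-\mathbf{q}^2-\dots-\mathbf{q}^{k-1}\bigr)=0.$$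
   Context: For integers $a,b$, $[a,b]$ denotes the set of integers $c$ with $a\le c\le b$. The factors in the product commute since they are polynomials in $\tau$. *)

(* Defs.v *)
From HB Require Import structures.
From mathcomp Require Import all_boot all_order all_algebra.
Set Implicit Arguments. Unset Strict Implicit. Unset Printing Implicit Defensive.
Import GRing.Theory.
Local Open Scope ring_scope.

(* Hecke algebra relations of type A_{n-1} for elements T 1, ..., T (n-1) of a
   {poly int}-algebra A (i.e. a Z[q]-algebra, q := 'X%:A).  The Hecke algebra H
   is the universal such algebra, so an identity holds in H iff it holds for
   every family satisfying these relations in every Z[q]-algebra. *)
Definition hecke_rel (A : algType {poly int}) (n : nat) (T : nat -> A) : Prop :=
  let q : A := 'X%:A in
  [/\ (forall i, (1 <= i <= n.-1)%N -> (T i + 1) * (T i - q) = 0),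
      (forall i, (1 <= i <= n - 2)%N -> T i * T i.+1 * T i = T i.+1 * T i * T i.+1)
    & (forall i j, (1 <= i <= n.-1)%N -> (1 <= j <= n.-1)%N -> (i + 1 < j)%N ->
         T i * T j = T j * T i)].

Definition hecke_tau (A : algType {poly int}) (n : nat) (T : nat -> A) : A :=
  \sum_(1 <= i < n) (\prod_(i <= j < n) T j) + 1.

(* Main.v *)
Require Import Defs.
From HB Require Import structures.
From mathcomp Require Import all_boot all_order all_algebra.
From mathcomp Require Import zify.
Set Implicit Arguments. Unset Strict Implicit. Unset Printing Implicit Defensive.
Import GRing.Theory.
Local Open Scope ring_scope.

Lemma tau0 (A : algType {poly int}) (T : nat -> A) : hecke_tau 0 T = 1.
Proof. by rewrite /hecke_tau big_geq // add0r. Qed.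

Lemma tau1 (A : algType {poly int}) (T : nat -> A) : hecke_tau 1 T = 1.
Proof. by rewrite /hecke_tau big_geq // add0r. Qed.

Lemma tau_rec (A : algType {poly int}) (T : nat -> A) k : (1 <= k)%N ->
  hecke_tau k.+1 T = 1 + hecke_tau k T * T k.
Proof.
move=> hk; rewrite /hecke_tau big_nat_recr //= big_nat1.
rewrite mulrDl mul1r mulr_suml.
rewrite [LHS]addrC; congr (1 + (_ + _)).
by apply: eq_big_nat => i /andP[_ hi]; rewrite big_nat_recr //= ltnW.
Qed.

Lemma stepA (R : ringType) (a s r u q : R) :
  a * r = r * a -> r * s * r = s * r * s -> q * r = r * q -> q * s = s * q ->
  (1 + r) * (r - q) = 0 -> u = 1 + a * s -> u * a * (s - q) = 0 ->
  (1 + u * r) * u * (r - q) = 0.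
Proof.
move=> ar rsr qr qs hr hu ha.
have e1 : r * s * (r - q) = (s - q) * (r * s).
  rewrite mulrBr mulrBl rsr !mulrA; congr (_ - _).
  by rewrite -[LHS]mulrA -qs [LHS]mulrA -qr.
have e2 : u * r * a * s * (r - q) = 0.
  have -> : u * r * a * s * (r - q) = u * a * (r * s * (r - q)).
    by rewrite !mulrA -(mulrA u r a) -ar mulrA.
  by rewrite e1 mulrA ha mul0r.
have e3 : u * r * u * (r - q) = u * r * (r - q) + u * r * a * s * (r - q).
  by rewrite {2}hu [u * r * (1 + _)]mulrDr mulr1 mulrDl !mulrA.
rewrite mulrDl mul1r mulrDl e3 e2 addr0 -!mulrA -mulrDr.
by rewrite -{1}[r - q]mul1r -mulrDl hr mulr0.
Qed.


Lemma tcomm (A : algType {poly int}) (T : nat -> A) (N : nat) :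
  (forall i j, (1 <= i <= N.-1)%N -> (1 <= j <= N.-1)%N -> (i + 1 < j)%N ->
         T i * T j = T j * T i) ->
  forall k j, (k < j)%N -> (j <= N.-1)%N -> T j * hecke_tau k T = hecke_tau k T * T j.
Proof.
move=> Hc k j; elim: k => [|k IH] hkj hj; first by rewrite tau0 mulr1 mul1r.
case: k IH hkj => [|k] IH hkj; first by rewrite tau1 mulr1 mul1r.
rewrite tau_rec //; apply: commrD; first exact: commr1.
apply: commrM; first by apply: IH; lia.
by rewrite /GRing.comm (Hc k.+1 j) //; lia.
Qed.

Fixpoint Yp (A : algType {poly int}) (T : nat -> A) (n m : nat) : A :=
  match m with 0 => 1 | m'.+1 => hecke_tau n T * Yp T n.-1 m' end.

Lemma Ycomm (A : algType {poly int}) (T : nat -> A) (N : nat) :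
  (forall i j, (1 <= i <= N.-1)%N -> (1 <= j <= N.-1)%N -> (i + 1 < j)%N ->
         T i * T j = T j * T i) ->
  forall m k j, (k < j)%N -> (j <= N.-1)%N -> T j * Yp T k m = Yp T k m * T j.
Proof.
move=> Hc; elim=> [|m IH] k j hkj hj /=; first by rewrite mulr1 mul1r.
rewrite mulrA (tcomm Hc) // -!mulrA IH //; lia.
Qed.

Lemma Yrecr (A : algType {poly int}) (T : nat -> A) m n :
  Yp T n m.+1 = Yp T n m * hecke_tau (n - m) T.
Proof.
elim: m n => [|m IH] n; first by rewrite /= mulr1 mul1r subn0.
change (hecke_tau n T * Yp T n.-1 m.+1 = Yp T n m.+1 * hecke_tau (n - m.+1) T).
rewrite (IH n.-1) mulrA.
by have -> : (n.-1 - m = n - m.+1)%N by lia.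
Qed.


Lemma LA (A : algType {poly int}) (T : nat -> A) (N : nat) :
  (forall i, (1 <= i <= N.-1)%N -> (T i + 1) * (T i - 'X%:A) = 0) ->
  (forall i, (1 <= i <= N - 2)%N -> T i * T i.+1 * T i = T i.+1 * T i * T i.+1) ->
  (forall i j, (1 <= i <= N.-1)%N -> (1 <= j <= N.-1)%N -> (i + 1 < j)%N ->
         T i * T j = T j * T i) ->
  forall k, (2 <= k <= N)%N ->
  hecke_tau k T * hecke_tau k.-1 T * (T k.-1 - 'X%:A) = 0.
Proof.
move=> Hq Hb Hc; elim=> [|k IH] // /andP[h2 hN].
case: k IH h2 hN => [|k] IH h2 hN //.
case: k IH h2 hN => [|k] IH h2 hN.
  rewrite /= tau1 mulr1 tau_rec // tau1 mul1r addrC; apply: Hq; lia.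
rewrite /= tau_rec //.
apply: (@stepA _ (hecke_tau k.+1 T) (T k.+1)).
- by rewrite (tcomm Hc) //; lia.
- by rewrite (Hb k.+1) //; lia.
- by rewrite mulr_algl mulr_algr.
- by rewrite mulr_algl mulr_algr.
- by rewrite addrC; apply: Hq; lia.
- by rewrite tau_rec.
- by apply: IH; lia.
Qed.


Definition Pq (m : nat) : {poly int} := \sum_(j < m) 'X^j.

Lemma Pq1 : Pq 1 = 1.
Proof. by rewrite /Pq big_ord1 expr0. Qed.

Lemma PqS m : Pq m.+1 = 1 + 'X * Pq m.
Proof.
rewrite /Pq big_ord_recl expr0 mulr_sumr; congr (_ + _).
by apply: eq_bigr => i _; rewrite exprS.
Qed.

Lemma PqSr m : Pq m.+1 = Pq m + 'X^m.
Proof. by rewrite /Pq big_ord_recr. Qed.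

Lemma tau_rec' (A : algType {poly int}) (T : nat -> A) n : (2 <= n)%N ->
  hecke_tau n T = 1 + hecke_tau n.-1 T * T n.-1.
Proof. by case: n => [|[|n]] // _; rewrite tau_rec. Qed.

Lemma K (A : algType {poly int}) (T : nat -> A) (N : nat) :
  (forall i, (1 <= i <= N.-1)%N -> (T i + 1) * (T i - 'X%:A) = 0) ->
  (forall i, (1 <= i <= N - 2)%N -> T i * T i.+1 * T i = T i.+1 * T i * T i.+1) ->
  (forall i j, (1 <= i <= N.-1)%N -> (1 <= j <= N.-1)%N -> (i + 1 < j)%N ->
         T i * T j = T j * T i) ->
  forall m n, (1 <= m)%N -> (m < n)%N -> (n <= N)%N ->
  Yp T n m * hecke_tau n T =
    Pq m *: Yp T n m + 'X^m *: (Yp T n m * hecke_tau (n - m) T).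
Proof.
move=> Hq Hb Hc.
have LA' : forall n, (2 <= n <= N)%N ->
    hecke_tau n T * hecke_tau n.-1 T * T n.-1 = 'X *: (hecke_tau n T * hecke_tau n.-1 T).
  move=> n hn; have /eqP := LA Hq Hb Hc hn.
  by rewrite mulrBr subr_eq0 mulr_algr => /eqP.
have YT : forall n m, (2 <= n <= N)%N ->
    hecke_tau n T * Yp T n.-1 m.+1 * T n.-1 = 'X *: (hecke_tau n T * Yp T n.-1 m.+1).
  move=> n m hn.
  change (hecke_tau n T * (hecke_tau n.-1 T * Yp T n.-1.-1 m) * T n.-1 =
     'X *: (hecke_tau n T * (hecke_tau n.-1 T * Yp T n.-1.-1 m))).
  rewrite !mulrA -mulrA -(@Ycomm _ _ N Hc m n.-2 n.-1); last 2 first.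
  - lia.
  - lia.
  by rewrite mulrA (LA' n hn) -scalerAl.
elim=> [|m IH] n // _ hmn hn.
case: m IH hmn => [|m] IH hmn.
  rewrite /= !mulr1 Pq1 scale1r expr1 subn1.
  rewrite [X in _ * X = _](tau_rec' T) ?[_ * (1 + _)]mulrDr ?mulr1 ?mulrA ?LA' //; lia.
have hn2 : (2 <= n <= N)%N by lia.
change (hecke_tau n T * Yp T n.-1 m.+1 * hecke_tau n T =
  Pq m.+2 *: (hecke_tau n T * Yp T n.-1 m.+1) +
  'X^(m.+2) *: (hecke_tau n T * Yp T n.-1 m.+1 * hecke_tau (n - m.+2) T)).
have e1 : hecke_tau n T * Yp T n.-1 m.+1 * hecke_tau n T =
    hecke_tau n T * Yp T n.-1 m.+1 +
    hecke_tau n T * (Yp T n.-1 m.+1 * hecke_tau n.-1 T) * T n.-1.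
  rewrite [X in _ * X = _](tau_rec' T); last lia.
  by rewrite [_ * (1 + _)]mulrDr mulr1 !mulrA.
rewrite e1 (IH n.-1); last 3 first.
- by [].
- lia.
- lia.
have hi : (n.-1 - m.+1 = n - m.+2)%N by lia.
have h1 := YT n m hn2.
have h2 : T n.-1 * hecke_tau (n - m.+2) T = hecke_tau (n - m.+2) T * T n.-1.
  by rewrite (tcomm Hc) //; lia.
rewrite hi.
move: h1 h2; move: (Yp T n.-1 m.+1) (hecke_tau n T) (hecke_tau (n - m.+2) T) (T n.-1).
move=> Y t t' s h1 h2.
rewrite mulrDr mulrDl -!scalerAr -!scalerAl.
have -> : t * (Y * t') * s = t * Y * s * t' by rewrite -!mulrA h2.
rewrite h1 -scalerAl !scalerA (PqS m.+1) scalerDl scale1r -addrA.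
by rewrite (mulrC (Pq m.+1)) -exprSr.
Qed.


Lemma Pi (A : algType {poly int}) (T : nat -> A) (N : nat) :
  (forall i, (1 <= i <= N.-1)%N -> (T i + 1) * (T i - 'X%:A) = 0) ->
  (forall i, (1 <= i <= N - 2)%N -> T i * T i.+1 * T i = T i.+1 * T i * T i.+1) ->
  (forall i j, (1 <= i <= N.-1)%N -> (1 <= j <= N.-1)%N -> (i + 1 < j)%N ->
         T i * T j = T j * T i) ->
  forall m, (1 <= m)%N -> (m < N)%N -> exists c : {poly int},
  hecke_tau N T * \prod_(1 <= k < m) (hecke_tau N T - (Pq k)%:A) = c *: Yp T N m.
Proof.
move=> Hq Hb Hc; elim=> [|m IH] // _ hm.
case: m IH hm => [|m] IH hm.
  by exists 1; rewrite big_geq // scale1r /= mulr1.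
have [c hc] := IH isT (ltnW hm).
exists (c * 'X^(m.+1)).
rewrite big_nat_recr // mulrA hc mulrBr -scalerAl (K Hq Hb Hc) //; last exact: ltnW.
rewrite mulr_algr scalerDr !scalerA (mulrC (Pq m.+1)) addrAC subrr add0r.
by rewrite -Yrecr.
Qed.

Lemma qsum (A : algType {poly int}) k :
  \sum_(j < k) ('X%:A : A) ^+ j = (Pq k)%:A.
Proof.
rewrite /Pq scaler_suml; apply: eq_bigr => j _.
by rewrite exprZn expr1n.
Qed.

Unset Implicit Arguments.
Set Strict Implicit.

Theorem proposition2 (n : nat) (A : algType {poly int}) (T : nat -> A) :
  (2 <= n)%N -> hecke_rel n T ->
  hecke_tau n T *
    \prod_(1 <= k < n.+1 | k != n.-1)
       (hecke_tau n T - \sum_(j < k) ('X%:A : A) ^+ j) = 0.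
Proof.
move=> hn [Hq Hb Hc].
under eq_bigr => k _ do rewrite qsum.
case: n hn Hq Hb Hc => [|[|n]] // _ Hq Hb Hc.
rewrite big_mkcond big_nat_recr //= big_nat_recr //= eqxx gtn_eqF //.
rewrite mulr1 (@eq_big_nat _ _ _ 1 n.+1 _ (fun k => hecke_tau n.+2 T - (Pq k)%:A)); last first.
  by move=> k /andP[_ hk]; rewrite ltn_eqF.
have [c hc] := Pi Hq Hb Hc (m:=n.+1) isT (ltnSn _).
rewrite mulrA hc mulrBr -scalerAl (K Hq Hb Hc) // subSnn tau1 mulr1 mulr_algr.
by rewrite -scalerDl -PqSr !scalerA (mulrC c) subrr.
Qed.
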